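(* Let $X$ be a Banach space and $f_k:X\to\mathbb{R}\cup\{+\infty\}$ $(k\in\mathbb{N}\cup\{0\})$ proper convex functions such that the set $C:=\operatorname{dom}f_0\cap\{x\in X: f_k(x)\le0\ \forall k\in\mathbb{N}\}$ is nonempty. Consider the problem (P): minimize $f_0(x)$ subject to $f_k(x)\le0$ $(k\in\mathbb{N})$, with optimal value $v(\mathrm{P})$, and the dual problems (D) and (D$_m$) defined in the context. Suppose $v(\mathrm{P})>-\infty$. Then for every $m=0,1,\ldots$, $$(\operatorname{cl}v)(0)\le v(\mathrm{D})\le v(\mathrm{D}_m)\le v(\mathrm{P}).$$ If, additionally, the Slater condition holds, i.e., there exists $x\in\operatorname{dom}f_0$ with $\sup_{k\in\mathbb{N}}f_k(x)<0$, then $v(\mathrm{P})=v(\mathrm{D})=v(\mathrm{D}_m)$ for every $m=0,1,\ldots$, and both (D) and (D$_m$) have solutions (the suprema defining them are attained). Moreover, in this case, if $\lambda=(\lambda_1,\lambda_2,\ldots)\in\ell^1_+$, $\lambda_\infty\in\mathbb{R}_+$ is a solution of (D), then $$\hat\lambda:=(\lambda_1,\ldots,\lambda_m,\lambda_{m+1}+\lambda_\infty+\alpha,\lambda_{m+2}+\lambda_\infty+\alpha,\ldots)$$ is a solution of (D$_m$), where $\alpha=0$ if $\lambda_\infty>0$ and $\alpha=1$ otherwise.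
   Context: Conventions: $0\cdot(+\infty)=+\infty$, $(+\infty)-(+\infty)=+\infty$, $\inf\emptyset=+\infty$. $\ell^1_+$ and $\ell^\infty_+$ are the sets of sequences in $\ell^1$, resp. $\ell^\infty$, with nonnegative entries; $\mathbb{R}_+=[0,+\infty)$. The value function is $v(\varepsilon):=\inf\{f_0(x): f_k(x)\le\varepsilon\ \forall k\in\mathbb{N}\}$ for $\varepsilon\in\mathbb{R}$, so $v(\mathrm{P})=v(0)$; $\operatorname{cl}v$ is its lower semicontinuous envelope (largest lower semicontinuous function majorized by $v$). Let $f_\infty(x):=\limsup_{k\to\infty}f_k(x)$ and $f_k^+:=\max\{f_k,0\}$. For $x\in X$, $\lambda\in\ell^1_+$, $\lambda_\infty\ge0$: $L(x,\lambda,\lambda_\infty):=f_0(x)+\overline{\sum_{k\in\mathbb{N}}}\lambda_kf_k(x)+\lambda_\infty f_\infty(x)$, where $\overline{\sum_{k\in\mathbb{N}}}\lambda_kf_k(x):=\limsup_{n\to\infty}\sum_{k=1}^n\lambda_kf_k(x)$. For $m\in\{0,1,\ldots\}$ and $\lambda\in\ell^\infty_+$: $L_m(x,\lambda):=f_0(x)+\sum_{k=1}^m\lambda_kf_k(x)+\sum_{k=m+1}^{\infty}\lambda_kf_k^+(x)$ (the first sum is $0$ when $m=0$). (D) is the problem $\sup_{\lambda\in\ell^1_+,\lambda_\infty\in\mathbb{R}_+}\inf_{x\in X}L(x,\lambda,\lambda_\infty)$ with value $v(\mathrm{D})$; (D$_m$) is $\sup_{\lambda\in\ell^\infty_+}\inf_{x\in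 X}L_m(x,\lambda)$ with value $v(\mathrm{D}_m)$. A solution of a dual problem is a point where its supremum is attained. *)

(* Defs.v *)
From HB Require Import structures.
From mathcomp Require Import all_boot all_order all_algebra.
From mathcomp Require Import all_classical all_reals all_analysis.
Set Implicit Arguments. Unset Strict Implicit. Unset Printing Implicit Defensive.
Import Order.TTheory GRing.Theory Num.Theory.
Import numFieldNormedType.Exports.
Local Open Scope classical_set_scope.
Local Open Scope ring_scope.
Local Open Scope ereal_scope.

Section Defs.
Context {R : realType} {X : normedModType R}.

Definition proper_fun (g : X -> \bar R) : Prop :=
  (forall x, g x != -oo) /\ (exists x, g x < +oo).

Definition convex_fun (g : X -> \bar R) : Prop :=
  forall (x y : X) (t : R), (0 < t < 1)%R ->
    g (t *: x + (1 - t) *: y)%R <= t%:E * g x + (1 - t)%:E * g y.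

(* multiplication of a nonnegative real by an extended real with the
   convention 0 * (+oo) = +oo (and 0 * (-oo) = 0) *)
Definition cmul (t : R) (a : \bar R) : \bar R :=
  if (t == 0%R) && (a == +oo) then +oo else t%:E * a.

(* addition with the convention (+oo) + (-oo) = +oo *)
Notation "a +' b" := (dual_adde a b) (at level 50, left associativity).

(* f k for k >= 1 are the constraints, f 0 is the objective *)
Variable f : nat -> X -> \bar R.

Definition vfun (eps : R) : \bar R :=
  ereal_inf [set f 0%N x | x in [set x | forall k, (0 < k)%N -> f k x <= eps%:E]].

Definition vP : \bar R := vfun 0.

Definition cl_vfun (eps : R) : \bar R :=
  ereal_sup [set g eps | g in
    [set g : R -> \bar R | lower_semicontinuous g /\ forall e, g e <= vfun e]].

Definition f_infty (x : X) : \bar R := limn_esup (fun k => f k x).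

Definition fplus (k : nat) (x : X) : \bar R := maxe (f k x) 0.

(* lambda is indexed by k >= 1; lambda 0 is irrelevant *)
Definition ell1_pos (lam : nat -> R) : Prop :=
  (forall k, (0 < k)%N -> (0 <= lam k)%R) /\
  \sum_(1 <= k <oo) (`|lam k|%R)%:E < +oo.

Definition ellinf_pos (lam : nat -> R) : Prop :=
  (forall k, (0 < k)%N -> (0 <= lam k)%R) /\
  exists M : R, forall k, (0 < k)%N -> (`|lam k| <= M)%R.

Definition psum (lam : nat -> R) (x : X) (n : nat) : \bar R :=
  \big[dual_adde/0]_(1 <= k < n.+1) cmul (lam k) (f k x).

Definition Lag (x : X) (lam : nat -> R) (linf : R) : \bar R :=
  f 0%N x +' limn_esup (psum lam x) +' cmul linf (f_infty x).

Definition Lag_m (m : nat) (x : X) (lam : nat -> R) : \bar R :=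
  f 0%N x +' (\big[dual_adde/0]_(1 <= k < m.+1) cmul (lam k) (f k x))
          +' \sum_(m.+1 <= k <oo) cmul (lam k) (fplus k x).

Definition dualD_obj (lam : nat -> R) (linf : R) : \bar R :=
  ereal_inf [set Lag x lam linf | x in setT].

Definition dualDm_obj (m : nat) (lam : nat -> R) : \bar R :=
  ereal_inf [set Lag_m m x lam | x in setT].

Definition vD : \bar R :=
  ereal_sup [set dualD_obj p.1 p.2 | p in
    [set p : (nat -> R) * R | ell1_pos p.1 /\ (0 <= p.2)%R]].

Definition vDm (m : nat) : \bar R :=
  ereal_sup [set dualDm_obj m lam | lam in [set lam | ellinf_pos lam]].

Definition solD (lam : nat -> R) (linf : R) : Prop :=
  ell1_pos lam /\ (0 <= linf)%R /\ dualD_obj lam linf = vD.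

Definition solDm (m : nat) (lam : nat -> R) : Prop :=
  ellinf_pos lam /\ dualDm_obj m lam = vDm m.

Definition slater : Prop :=
  exists x, f 0%N x < +oo /\
    ereal_sup [set f k x | k in [set k | (0 < k)%N]] < 0.

End Defs.

Definition lam_hat {R : realType} (lam : nat -> R) (linf : R) (m : nat) : nat -> R :=
  fun k => if (k <= m)%N then lam k
           else (lam k + linf + (if (0 < linf)%R then 0 else 1))%R.

(* Main.v *)
Require Import Defs.
From HB Require Import structures.
From mathcomp Require Import all_boot all_order all_algebra.
From mathcomp Require Import all_classical all_reals all_analysis.
From mathcomp Require Import ring lra.
Import Order.TTheory GRing.Theory Num.Theory.
Import numFieldNormedType.Exports.
Local Open Scope classical_set_scope.
Local Open Scope ring_scope.

Section Cluster.
Variable R : realType.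
Local Notation PT := (prod_topology (fun _ : nat => R)).

Lemma cluster_seq (B : R) (p : nat -> nat -> R) :
  (forall n i, 0 <= p n i <= B) ->
  exists q : nat -> R, (forall i, 0 <= q i <= B) /\
    forall Q : set PT, closed Q -> (exists N, forall n, (N <= n)%N -> Q (p n)) -> Q q.
Proof.
move=> hp.
have cA : compact [set g : PT | forall i, `[0, B]%classic (g i)].
  by apply: (@tychonoff nat (fun _ => R) (fun _ => `[0, B]%classic)) => i; exact: segment_compact.
pose F := ((fun n : nat => (p n : PT)) @ \oo).
have FF : ProperFilter F by rewrite /F; exact: fmap_proper_filter.
have FA : F [set g : PT | forall i, `[0, B]%classic (g i)].
  by exists 0%N => // n _ i /=; rewrite in_itv /=; exact: hp.
have [q [Aq clq]] := cA F FF FA.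
exists q; split.
  by move=> i; have := Aq i; rewrite /= in_itv.
move=> Q cQ [N hN].
apply: cQ => V nV.
have FQ : F Q by exists N => // n /= Nn; exact: hN.
have := clq Q V FQ nV.
by move=> [r [Qr Vr]]; exists r.
Qed.

Lemma contD' (f g : PT -> R) x : {for x, continuous f} -> {for x, continuous g} ->
  {for x, continuous (fun y => f y + g y)}.
Proof. exact: continuousD. Qed.

Lemma contM' (f g : PT -> R) x : {for x, continuous f} -> {for x, continuous g} ->
  {for x, continuous (fun y => f y * g y)}.
Proof. exact: continuousM. Qed.

Lemma cont_proj (i : nat) : continuous (fun g : PT => g i).
Proof. exact: (@proj_continuous nat (fun _ => R) i). Qed.

Lemma closed_lin (c b : R) (a : nat -> R) (K : nat) :
  closed [set g : PT | 0 <= c + g 0%N * b + \sum_(1 <= k < K.+1) g k * a k].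
Proof.
have ct : continuous (fun g : PT => c + g 0%N * b + \sum_(1 <= k < K.+1) g k * a k).
  move=> g.
  apply: contD'.
    apply: contD'; first exact: cst_continuous.
    apply: contM'; [exact: cont_proj | exact: cst_continuous].
  elim: K => [|K IH].
    rewrite (_ : (fun g => _) = fun=> 0); first exact: cst_continuous.
    by apply: funext => h; rewrite big_geq.
  rewrite (_ : (fun g => _) = (fun g : PT => \sum_(1 <= k < K.+1) g k * a k) + (fun g : PT => g K.+1 * a K.+1)).
    apply: contD' => //.
    apply: contM'; [exact: cont_proj | exact: cst_continuous].
  by apply: funext => h /=; rewrite big_nat_recr.
exact: (preimage_closed (fun x _ => ct x) (@closed_ge R 0)).
Qed.

End Cluster.

Section FGH.
Variable R : realType.
Variable X : lmodType R.

Definition cvx_set (D : set X) := forall x y (t : R), D x -> D y -> 0 < t < 1 ->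
  D (t *: x + (1 - t) *: y).
Definition cvx_on (D : set X) (g : X -> R) := forall x y (t : R), D x -> D y -> 0 < t < 1 ->
  g (t *: x + (1 - t) *: y) <= t * g x + (1 - t) * g y.

Lemma two_claim (D : set X) (h g : X -> R) : cvx_set D -> cvx_on D h -> cvx_on D g ->
  ~ (exists x, D x /\ h x < 0 /\ g x < 0) ->
  forall x y, D x -> D y -> 0 <= g x -> g y < 0 ->
  0 <= (- g y) * h x + g x * h y.
Proof.
move=> cD ch cg nex x y Dx Dy gx0 gy0.
rewrite leNgt; apply/negP => Sneg.
set S := (- g y) * h x + g x * h y in Sneg.
set d := g x - g y.
have d0 : 0 < d by rewrite /d; lra.
set ts := - g y / d.
have tsd : ts * d = - g y by rewrite /ts mulrAC -mulrA divff ?mulr1 // gt_eqF.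
have ts0 : 0 < ts by rewrite /ts divr_gt0 //; lra.
have ts1 : ts <= 1 by rewrite /ts ler_pdivrMr //; rewrite /d; lra.
set c := `|h x - h y| + 1.
have c0 : 0 < c by rewrite /c; have := normr_ge0 (h x - h y); lra.
set m := - S / d / (2 * c).
have m0 : 0 < m by rewrite /m !divr_gt0 //; lra.
have mc : m * c = - S / d / 2.
  rewrite /m; field.
  all: try (apply/negP => /eqP; lra).
  apply/andP; split; apply/negP => /eqP; lra.
set eta := Num.min (ts / 2) m.
have eta0 : 0 < eta by rewrite /eta lt_min; apply/andP; split => //; rewrite divr_gt0.
have etats : eta <= ts / 2 by rewrite /eta ge_min lexx.
have etam : eta <= m by rewrite /eta ge_min lexx orbT.
set t := ts - eta.
have t0 : 0 < t by rewrite /t; lra.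
have t1 : t < 1 by rewrite /t; lra.
have t01 : 0 < t < 1 by apply/andP.
have Dz := ch _ _ _ Dx Dy t01.
have Gz := cg _ _ _ Dx Dy t01.
apply: nex; exists (t *: x + (1 - t) *: y); split.
  exact: cD.
split.
- apply: (le_lt_trans Dz).
  have e1 : t * h x + (1 - t) * h y = h y + ts * (h x - h y) - eta * (h x - h y).
    by rewrite /t; ring.
  have e2 : h y + ts * (h x - h y) = S / d.
    rewrite /ts /S /d; field; apply/negP => /eqP; lra.
  have e3 : - (eta * (h x - h y)) <= eta * c.
    rewrite /c -mulrN; apply: ler_wpM2l; first lra.
    have := ler_norm (- (h x - h y)); rewrite normrN; lra.
  have e4 : eta * c <= m * c by apply: ler_wpM2r; lra.
  have e5 : S / d < 0 by rewrite pmulr_llt0 ?invr_gt0.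
  rewrite e1 e2; lra.
- apply: (le_lt_trans Gz).
  have e1 : t * g x + (1 - t) * g y = g y + ts * d - eta * d by rewrite /t /d; ring.
  rewrite e1 tsd.
  have : 0 < eta * d by rewrite mulr_gt0.
  lra.
Qed.


Lemma divle_aux (a b p q : R) : 0 < p -> 0 < q -> a * q <= b * p -> a / p <= b / q.
Proof.
move=> p0 q0 h; rewrite ler_pdivrMr // mulrAC ler_pdivlMr //.
Qed.

Lemma two_fun (D : set X) (h g : X -> R) : cvx_set D -> cvx_on D h -> cvx_on D g ->
  ~ (exists x, D x /\ h x < 0 /\ g x < 0) ->
  exists a b : R, 0 <= a /\ 0 <= b /\ 0 < a + b /\ forall x, D x -> 0 <= a * h x + b * g x.
Proof.
move=> cD ch cg nex.
have cl := @two_claim D h g cD ch cg nex.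
have [[y0 [Dy0 gy0]]|nog] := pselect (exists y, D y /\ g y < 0); last first.
  exists 0, 1; split => //; split => //; split; first by rewrite add0r.
  move=> x Dx; rewrite mul0r add0r mul1r leNgt; apply/negP => gx0.
  by apply: nog; exists x.
have hpos y : D y -> g y < 0 -> 0 <= h y.
  move=> Dy gy; rewrite leNgt; apply/negP => hy; apply: nex; exists y; split => //.
pose E := [set r | exists x, D x /\ 0 < g x /\ r = - h x / g x] `|` [set 0].
have ubE y : D y -> g y < 0 -> ubound E (h y / (- g y)).
  move=> Dy gy r [[x [Dx [gx ->]]]|->].
    apply: divle_aux => //; first lra.
    have := cl x y Dx Dy (ltW gx) gy; lra.
  apply: divr_ge0; [exact: hpos | lra].
have E0 : E 0 by right.
have hsE : has_ubound E by exists (h y0 / (- g y0)); exact: ubE.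
set b := sup E.
have b0 : 0 <= b by exact: (ub_le_sup hsE).
exists 1, b; split => //; split => //; split; first lra.
move=> x Dx; rewrite mul1r.
case: (ltgtP (g x) 0) => gx.
- have := ge_sup (ex_intro _ 0 E0) (ubE x Dx gx).
  rewrite ler_pdivlMr; last lra.
  rewrite -/b; nra.
- have : - h x / g x <= b by apply: (ub_le_sup hsE); left; exists x.
  rewrite ler_pdivrMr //; nra.
- have gx0 : 0 <= g x by rewrite gx.
  have := cl x y0 Dx Dy0 gx0 gy0.
  rewrite gx mul0r addr0.
  move=> H; have : 0 <= h x by rewrite -(pmulr_rge0 _ (_ : 0 < - g y0)) //; lra.
  lra.
Qed.


Lemma cvx_comb (D : set X) (G : nat -> X -> R) (c : nat -> R) (n : nat) :
  (forall i, (i < n)%N -> cvx_on D (G i)) -> (forall i, 0 <= c i) ->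
  cvx_on D (fun x => \sum_(0 <= i < n) c i * G i x).
Proof.
move=> cG c0 x y t Dx Dy t01.
have -> : t * (\sum_(0 <= i < n) c i * G i x) + (1 - t) * (\sum_(0 <= i < n) c i * G i y)
  = \sum_(0 <= i < n) c i * (t * G i x + (1 - t) * G i y).
  rewrite !mulr_sumr -big_split /=; apply: eq_bigr => i _; ring.
apply: ler_sum_nat => i /andP[_ iin].
by apply: ler_wpM2l => //; apply: cG.
Qed.

Lemma fgh (n : nat) : forall (D : set X) (G : nat -> X -> R), cvx_set D ->
  (forall i, (i <= n)%N -> cvx_on D (G i)) ->
  ~ (exists x, D x /\ forall i, (i <= n)%N -> G i x < 0) ->
  exists c : nat -> R, (forall i, 0 <= c i) /\ 0 < \sum_(0 <= i < n.+1) c i /\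
    forall x, D x -> 0 <= \sum_(0 <= i < n.+1) c i * G i x.
Proof.
elim: n => [|n IH] D G cD cG nex.
  exists (fun i => if i == 0%N then 1 else 0); split.
    by move=> i; case: ifP.
  rewrite big_nat1 /=; split => // x Dx; rewrite big_nat1 /= mul1r.
  rewrite leNgt; apply/negP => gx; apply: nex; exists x; split => // i.
  by rewrite leqn0 => /eqP ->.
pose D' := D `&` [set x | G n.+1 x < 0].
have cD' : cvx_set D'.
  move=> x y t [Dx gx] [Dy gy] t01; split; first exact: cD.
  apply: (le_lt_trans (cG n.+1 (leqnn _) _ _ _ Dx Dy t01)).
  move: t01 => /andP[t0 t1].
  have : t * G n.+1 x < 0 by rewrite pmulr_rlt0.
  have : (1 - t) * G n.+1 y < 0 by rewrite pmulr_rlt0 // subr_gt0.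
  lra.
have [c' [c'0 [c'pos c'ineq]]] : exists c : nat -> R, (forall i, 0 <= c i) /\
    0 < \sum_(0 <= i < n.+1) c i /\
    forall x, D' x -> 0 <= \sum_(0 <= i < n.+1) c i * G i x.
  apply: IH => //.
    move=> i iin x y t [Dx _] [Dy _] t01; apply: cG => //; exact: leqW.
  move=> [x [[Dx gx] hx]]; apply: nex; exists x; split => // i.
  by rewrite leq_eqVlt ltnS => /orP[/eqP ->|]; [exact: gx| exact: hx].
pose h := fun x => \sum_(0 <= i < n.+1) c' i * G i x.
have ch : cvx_on D h.
  apply: cvx_comb => // i; rewrite ltnS => iin; apply: cG; exact: leqW.
have nex2 : ~ (exists x, D x /\ h x < 0 /\ G n.+1 x < 0).
  move=> [x [Dx [hx gx]]]; have := c'ineq x (conj Dx gx); rewrite -/(h x); lra.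
have [a [b [a0 [b0 [ab0 abI]]]]] := @two_fun D h (G n.+1) cD ch (cG n.+1 (leqnn _)) nex2.
exists (fun i => if (i <= n)%N then a * c' i else if i == n.+1 then b else 0).
have sumE (F : nat -> R) : \sum_(0 <= i < n.+2) (if (i <= n)%N then a * c' i * F i
    else if i == n.+1 then b * F i else 0)
    = a * (\sum_(0 <= i < n.+1) c' i * F i) + b * F n.+1.
  rewrite big_nat_recr //= ltnn eqxx mulr_sumr; congr (_ + _).
  by apply: eq_big_nat => i /andP[_]; rewrite ltnS => ->; rewrite mulrA.
split.
  by move=> i; case: ifP => _; [exact: mulr_ge0|case: ifP].
split.
  have e := sumE (fun=> 1).
  have -> : \sum_(0 <= i < n.+2) (if (i <= n)%N then a * c' i else if i == n.+1 then b else 0)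
    = \sum_(0 <= i < n.+2) (if (i <= n)%N then a * c' i * 1 else if i == n.+1 then b * 1 else 0).
    by apply: eq_bigr => i _; case: ifP => _; rewrite ?mulr1 //; case: ifP => _; rewrite ?mulr1.
  rewrite e; under eq_bigr do rewrite mulr1.
  rewrite mulr1.
  have [a00|a0'] := eqVneq a 0.
    by rewrite a00 mul0r add0r; move: ab0; rewrite a00 add0r.
  have : 0 < a by rewrite lt_neqAle eq_sym a0' a0.
  move=> apos; have := mulr_gt0 apos c'pos; lra.
move=> x Dx.
have := sumE (fun i => G i x).
have -> : \sum_(0 <= i < n.+2) (if (i <= n)%N then a * c' i * G i x
    else if i == n.+1 then b * G i x else 0) =
    \sum_(0 <= i < n.+2) (if (i <= n)%N then a * c' i else if i == n.+1 then b else 0) * G i x.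
  by apply: eq_bigr => i _; case: ifP => //; case: ifP => //; rewrite mul0r.
by move=> ->; exact: abI.
Qed.

End FGH.
Arguments cvx_set {R X}.
Arguments cvx_on {R X}.
Arguments fgh {R X}.

Section Core.
Variable R : realType.
Variable X : normedModType R.
Variable f : nat -> X -> \bar R.
Hypothesis hNy : forall k x, f k x != -oo%E.
Hypothesis hcv : forall k, convex_fun (f k).

Definition tl (K : nat) (x : X) : \bar R := ereal_sup [set f k x | k in [set k | (K < k)%N]].
Definition good (x : X) := (f 0%N x < +oo)%E /\ (tl 0 x < +oo)%E.
Definition fr k x := fine (f k x).
Definition tr K x := fine (tl K x).

Lemma fin_aux (a b c : \bar R) (t : R) : a != -oo%E -> b \is a fin_num -> c \is a fin_num ->
  0 < t < 1 -> (a <= t%:E * b + (1 - t)%:E * c)%E ->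
  a \is a fin_num /\ fine a <= t * fine b + (1 - t) * fine c.
Proof.
move: a b c => [a| |] [b| |] [c| |] //= _ _ _ _; rewrite -!EFinM -EFinD ?lee_fin //.
Qed.

Lemma f_le_tl k K x : (K < k)%N -> (f k x <= tl K x)%E.
Proof. by move=> Kk; apply: ereal_sup_ubound; exists k. Qed.

Lemma tl_mono K L x : (K <= L)%N -> (tl L x <= tl K x)%E.
Proof.
move=> KL; apply: ereal_sup_le => _ [k /= Lk <-]; exists k => //=.
exact: leq_ltn_trans Lk.
Qed.

Lemma tl_gtNy K x : (-oo < tl K x)%E.
Proof.
apply: (lt_le_trans _ (@f_le_tl K.+1 K x (ltnSn K))).
by rewrite ltNye.
Qed.

Lemma good_fin k x : good x -> f k x \is a fin_num.
Proof.
move=> [f0 t0]; rewrite fin_numE hNy /=.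
case: k => [|k]; first by rewrite lt_eqF.
by rewrite lt_eqF // (le_lt_trans (@f_le_tl k.+1 0 x (ltn0Sn k))).
Qed.

Lemma good_tfin K x : good x -> tl K x \is a fin_num.
Proof.
move=> [f0 t0]; rewrite fin_numE gt_eqF ?tl_gtNy //=.
by rewrite lt_eqF // (le_lt_trans (@tl_mono 0 K x (leq0n K))).
Qed.

Arguments good_fin k {x}.
Arguments good_tfin K {x}.
Arguments f_le_tl {k K x}.
Arguments tl_mono {K L x}.

Lemma tl_cvx K (x y : X) (t : R) : 0 < t < 1 ->
  (tl K (t *: x + (1 - t) *: y)%R <= t%:E * tl K x + (1 - t)%:E * tl K y)%E.
Proof.
move=> t01; move: (t01) => /andP[t0 t1]; apply: ge_ereal_sup => _ [k /= Kk <-].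
apply: (le_trans (hcv _ _ _ _ t01)).
by apply: leeD; (apply: lee_wpmul2l; [rewrite lee_fin; lra|exact: (@f_le_tl k K _ Kk)]).
Qed.

Lemma good_cvx : cvx_set good.
Proof.
move=> x y t [fx tx] [fy ty] t01; move: (t01) => /andP[t0 t1]; split.
  apply: (le_lt_trans (hcv _ _ _ _ t01)).
  by rewrite lte_add_pinfty // lte_mul_pinfty // ?lee_fin ?subr_ge0 ?ltW.
apply: (le_lt_trans (tl_cvx _ _ _ _ t01)).
by rewrite lte_add_pinfty // lte_mul_pinfty // ?lee_fin ?subr_ge0 ?ltW.
Qed.

Lemma fr_cvx k : cvx_on good (fr k).
Proof.
move=> x y t gx gy t01.
have := @fin_aux _ _ _ t (hNy k _) (@good_fin k _ gx) (@good_fin k _ gy) t01 (hcv _ _ _ _ t01).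
by case.
Qed.

Lemma tr_cvx K : cvx_on good (tr K).
Proof.
move=> x y t gx gy t01.
have hn : tl K (t *: x + (1 - t) *: y)%R != -oo%E by rewrite -ltNye tl_gtNy.
have := @fin_aux _ _ _ t hn (@good_tfin K _ gx) (@good_tfin K _ gy) t01 (tl_cvx _ _ _ _ t01).
by case.
Qed.


Lemma cvx_subc (D : set X) (g : X -> R) (c : R) : cvx_on D g -> cvx_on D (fun x => g x - c).
Proof.
move=> cg x y t Dx Dy t01; have := cg x y t Dx Dy t01.
have -> : t * (g x - c) + (1 - t) * (g y - c) = t * g x + (1 - t) * g y - c by ring.
lra.
Qed.

Lemma fr_le_tr k K x : good x -> (K < k)%N -> fr k x <= tr K x.
Proof.
move=> gx Kk; apply: fine_le; [exact: good_fin|exact: good_tfin|exact: f_le_tl].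
Qed.

Lemma tr_mono K L x : good x -> (K <= L)%N -> tr L x <= tr K x.
Proof.
move=> gx KL; apply: fine_le; [exact: good_tfin|exact: good_tfin|exact: tl_mono].
Qed.

Arguments fr_le_tr {k K x}.
Arguments tr_mono {K L x}.

Lemma sum_nonneg_le (c : nat -> R) (a b d : nat) : (forall i, 0 <= c i) -> (b <= d)%N ->
  \sum_(a <= i < b) c i <= \sum_(a <= i < d) c i.
Proof.
move=> c0 bd; case: (leqP a b) => ab.
  rewrite (big_cat_nat ab bd) /= lerDl; exact: sumr_ge0.
by rewrite big_geq ?(ltnW ab) //; exact: sumr_ge0.
Qed.

Lemma trunc_kkt (eps V delta : R) (xb : X) (n : nat) :
  (forall x, good x -> (forall k, (0 < k)%N -> (f k x <= eps%:E)%E) -> V <= fr 0 x) ->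
  0 < delta -> (f 0%N xb < +oo)%E -> (forall k, (0 < k)%N -> (f k xb <= (eps - delta)%:E)%E) ->
  exists lam : nat -> R, (forall k, 0 <= lam k) /\ lam 0%N <= (fr 0 xb - V) / delta /\
   (forall K, \sum_(1 <= k < K.+1) lam k <= lam 0%N) /\
   forall x, good x -> forall K, (K <= n)%N ->
     0 <= fr 0 x - V + \sum_(1 <= k < K.+1) lam k * (fr k x - eps)
          + (lam 0%N - \sum_(1 <= k < K.+1) lam k) * (tr K x - eps).
Proof.
move=> Vle d0 f0b slb.
have tlb : (tl n xb <= (eps - delta)%:E)%E.
  by apply: ge_ereal_sup => _ [k /= nk <-]; apply: slb; exact: leq_ltn_trans nk.
have gb : good xb.
  split => //; apply: le_lt_trans (_ : ((eps - delta)%:E < +oo)%E); last exact: ltry.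
  by apply: ge_ereal_sup => _ [k /= nk <-]; apply: slb.
have frb k : (0 < k)%N -> fr k xb - eps <= - delta.
  move=> k0; have := fine_le (good_fin k gb) _ (slb k k0); rewrite /fr /=.
  by move=> /(_ isT); lra.
have trb : tr n xb - eps <= - delta.
  have := fine_le (good_tfin n gb) _ tlb; rewrite /tr /=.
  by move=> /(_ isT); lra.
pose G := fun i => if i == 0%N then (fun x => fr 0 x - V) else if (i <= n)%N
  then (fun x => fr i x - eps) else (fun x => tr n x - eps).
have cG : forall i, (i <= n.+1)%N -> cvx_on good (G i).
  move=> i _; rewrite /G; case: eqP => _; first exact: cvx_subc (fr_cvx 0).
  by case: ifP => _; [exact: cvx_subc (fr_cvx i)| exact: cvx_subc (tr_cvx n)].
have nex : ~ (exists x, good x /\ forall i, (i <= n.+1)%N -> G i x < 0).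
  move=> [x [gx hx]].
  have h0 := hx 0%N isT; rewrite /G /= in h0.
  suff : V <= fr 0 x by lra.
  apply: Vle => // k k0.
  case: (leqP k n) => kn.
    have := hx k (leqW kn); rewrite /G (gtn_eqF k0) kn => hk.
    by rewrite -(fineK (good_fin k gx)) lee_fin -/(fr k x); lra.
  have := hx n.+1 (leqnn _); rewrite /G /= ltnn => hk.
  apply: (le_trans (@f_le_tl k n x kn)).
  by rewrite -(fineK (good_tfin n gx)) lee_fin -/(tr n x); lra.
have [c [c0 [cpos cI]]] := fgh (n.+1) good G good_cvx cG nex.
have dec x : \sum_(0 <= i < n.+2) c i * G i x = c 0%N * (fr 0 x - V)
    + \sum_(1 <= i < n.+1) c i * (fr i x - eps) + c n.+1 * (tr n x - eps).
  rewrite big_nat_recr //= big_ltn //= /G /= ltnn.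
  congr (_ + _ + _); apply: eq_big_nat => i /andP[i1]; rewrite ltnS => ->.
  by rewrite (gtn_eqF i1).
set T := \sum_(1 <= i < n.+1) c i.
set S1 := \sum_(1 <= i < n.+2) c i.
have S1E : S1 = T + c n.+1 by rewrite /S1 big_nat_recr.
have T0 : 0 <= T by exact: sumr_ge0.
have sumE : \sum_(0 <= i < n.+2) c i = c 0%N + S1 by rewrite big_ltn.
have slat : 0 <= c 0%N * (fr 0 xb - V) - delta * S1.
  have := cI xb gb; rewrite dec.
  have h1 : \sum_(1 <= i < n.+1) c i * (fr i xb - eps) <= \sum_(1 <= i < n.+1) c i * (- delta).
    apply: ler_sum_nat => i /andP[i1 _]; apply: ler_wpM2l => //; exact: frb.
  have h2 : c n.+1 * (tr n xb - eps) <= c n.+1 * (- delta) by apply: ler_wpM2l.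
  rewrite -mulr_suml -/T in h1.
  rewrite S1E; lra.
have c0pos : 0 < c 0%N.
  rewrite lt_neqAle c0 andbT; apply/negP => /eqP c00.
  move: slat cpos; rewrite sumE -c00 mul0r add0r => slat S1pos.
  have := mulr_gt0 d0 S1pos; lra.
pose lam := fun i => if i == 0%N then S1 / c 0%N else if (i <= n)%N then c i / c 0%N else 0.
have lamE k : (0 < k)%N -> (k <= n)%N -> lam k = c k / c 0%N.
  by move=> k0 kn; rewrite /lam (gtn_eqF k0) kn.
have sumlam K : (K <= n)%N -> \sum_(1 <= k < K.+1) lam k = (\sum_(1 <= k < K.+1) c k) / c 0%N.
  move=> Kn; rewrite mulr_suml; apply: eq_big_nat => k /andP[k1 kK].
  by apply: lamE => //; rewrite -ltnS (leq_trans kK).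
exists lam; split.
  move=> k; rewrite /lam; case: eqP => _.
    by apply: divr_ge0; [rewrite S1E; have := c0 n.+1; lra | exact: ltW].
  by case: ifP => _ //; exact: divr_ge0.
split.
  rewrite {1}/lam eqxx; apply: divle_aux => //; lra.
split.
  move=> K; rewrite {2}/lam eqxx.
  case: (leqP K n) => Kn.
    rewrite sumlam //; apply: ler_wpM2r; first by rewrite invr_ge0 ltW.
    rewrite S1E; have := @sum_nonneg_le c 1 K.+1 n.+1 c0 Kn; rewrite -/T.
    by have := c0 n.+1; lra.
  rewrite (big_cat_nat (_ : (1 <= n.+1)%N) (_ : (n.+1 <= K.+1)%N)) //=; last by rewrite ltnS ltnW.
  rewrite [X in _ + X]big1_seq ?addr0; last first.
    move=> k /andP[_]; rewrite mem_index_iota => /andP[nk _]; rewrite /lam.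
    by rewrite (gtn_eqF (leq_ltn_trans (leq0n n) nk)) leqNgt nk.
  rewrite (sumlam n (leqnn n)) -/T; apply: ler_wpM2r; first by rewrite invr_ge0 ltW.
  by rewrite S1E; have := c0 n.+1; lra.
move=> x gx K Kn.
rewrite (sumlam K Kn).
set Bs := \sum_(1 <= k < K.+1) c k.
have -> : \sum_(1 <= k < K.+1) lam k * (fr k x - eps) = (\sum_(1 <= k < K.+1) c k * (fr k x - eps)) / c 0%N.
  rewrite mulr_suml; apply: eq_big_nat => k /andP[k1 kK].
  rewrite lamE //; last by rewrite -ltnS (leq_trans kK).
  by rewrite mulrAC.
set A := \sum_(1 <= k < K.+1) c k * (fr k x - eps).
rewrite {1}/lam eqxx.
have key : 0 <= c 0%N * (fr 0 x - V) + A + (S1 - Bs) * (tr K x - eps).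
  have := cI x gx; rewrite dec.
  have split1 : \sum_(1 <= i < n.+1) c i * (fr i x - eps) = A + \sum_(K.+1 <= i < n.+1) c i * (fr i x - eps).
    by rewrite (big_cat_nat (_ : (1 <= K.+1)%N) (_ : (K.+1 <= n.+1)%N)).
  have split2 : T = Bs + \sum_(K.+1 <= i < n.+1) c i.
    by rewrite /T (big_cat_nat (_ : (1 <= K.+1)%N) (_ : (K.+1 <= n.+1)%N)).
  have h1 : \sum_(K.+1 <= i < n.+1) c i * (fr i x - eps) <= \sum_(K.+1 <= i < n.+1) c i * (tr K x - eps).
    apply: ler_sum_nat => i /andP[Ki _]; apply: ler_wpM2l => //.
    have := fr_le_tr gx Ki; lra.
  have h2 : c n.+1 * (tr n x - eps) <= c n.+1 * (tr K x - eps).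
    by apply: ler_wpM2l => //; have := tr_mono gx Kn; lra.
  rewrite -mulr_suml in h1.
  rewrite split1 S1E split2.
  set Z := \sum_(K.+1 <= i < n.+1) c i in h1 *.
  have : (Bs + Z + c n.+1 - Bs) * (tr K x - eps) = Z * (tr K x - eps) + c n.+1 * (tr K x - eps) by ring.
  lra.
have -> : fr 0 x - V + A / c 0%N + (S1 / c 0%N - Bs / c 0%N) * (tr K x - eps)
  = (c 0%N * (fr 0 x - V) + A + (S1 - Bs) * (tr K x - eps)) / c 0%N.
  by field; rewrite gt_eqF.
exact: divr_ge0 key (ltW c0pos).
Qed.

End Core.
Arguments good {R X}.
Arguments fr {R X}.
Arguments tr {R X}.
Arguments tl {R X}.

Lemma lin_id (R : realType) (g : nat -> R) (K : nat) (c e t : R) (F : nat -> R) :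
 c + g 0%N * (t - e) + \sum_(1 <= k < K.+1) g k * (F k - t) =
 c + \sum_(1 <= k < K.+1) g k * (F k - e) + (g 0%N - \sum_(1 <= k < K.+1) g k) * (t - e).
Proof.
have -> : \sum_(1 <= k < K.+1) g k * (F k - e) =
  \sum_(1 <= k < K.+1) g k * (F k - t) + (\sum_(1 <= k < K.+1) g k) * (t - e).
  by rewrite mulr_suml -big_split; apply: eq_bigr => i _ /=; ring.
ring.
Qed.

Lemma lin_id2 (R : realType) (g : nat -> R) (K : nat) :
  0 + g 0%N * 1 + \sum_(1 <= k < K.+1) g k * (-1) = g 0%N - \sum_(1 <= k < K.+1) g k.
Proof. by rewrite add0r mulr1 -sumrN; under eq_bigr do rewrite mulrN1. Qed.

Section Core2.
Variable R : realType.
Variable X : normedModType R.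
Variable f : nat -> X -> \bar R.
Hypothesis hNy : forall k x, f k x != -oo%E.
Hypothesis hcv : forall k, convex_fun (f k).

Lemma core (eps V delta : R) (xb : X) :
  (forall x, good f x -> (forall k, (0 < k)%N -> (f k x <= eps%:E)%E) -> V <= fr f 0 x) ->
  0 < delta -> (f 0%N xb < +oo)%E -> (forall k, (0 < k)%N -> (f k xb <= (eps - delta)%:E)%E) ->
  exists lam : nat -> R, (forall k, 0 <= lam k) /\
   (forall K, \sum_(1 <= k < K.+1) lam k <= lam 0%N) /\
   forall x, good f x -> forall K,
     0 <= fr f 0 x - V + \sum_(1 <= k < K.+1) lam k * (fr f k x - eps)
          + (lam 0%N - \sum_(1 <= k < K.+1) lam k) * (tr f K x - eps).
Proof.
move=> Vle d0 f0b slb.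
have /choice [p hp] := fun n => @trunc_kkt R X f hNy hcv eps V delta xb n Vle d0 f0b slb.
set B := (fr f 0 xb - V) / delta.
have pb n i : 0 <= p n i <= B.
  have [p0 [pB [ps _]]] := hp n.
  rewrite p0 /=; case: i => [//|i].
  have h1 : p n i.+1 <= \sum_(1 <= k < i.+2) p n k.
    by rewrite big_nat_recr //= lerDr; exact: sumr_ge0.
  exact: le_trans h1 (le_trans (ps i.+1) pB).
have [q [qb qQ]] := @cluster_seq R B p pb.
exists q; split; first by move=> i; have /andP[] := qb i.
split.
  move=> K; have := qQ _ (@closed_lin R 0 1 (fun=> -1) K).
  rewrite /= lin_id2 subr_ge0; apply; exists 0%N => n _.
  have [_ [_ [ps _]]] := hp n.
  by rewrite /= lin_id2 subr_ge0.
move=> x gx K.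
have := qQ _ (@closed_lin R (fr f 0 x - V) (tr f K x - eps) (fun k => fr f k x - tr f K x) K).
rewrite /= lin_id; apply; exists K => n Kn.
have [_ [_ [_ pI]]] := hp n.
by rewrite /= lin_id; exact: pI.
Qed.

End Core2.

Import DualAddTheory.

Section LS.
Variable R : realType.
Implicit Types u : nat -> \bar R.

Lemma LS_lb u (b : \bar R) :
  (forall N, (b <= ereal_sup [set u k | k in [set k | (N < k)%N]])%E) -> (b <= limn_esup u)%E.
Proof.
move=> h; rewrite /limn_esup /limf_esup; apply: le_ereal_inf_tmp => _ [V [N _ NV] <-].
apply: (le_trans (h N)); apply: ereal_sup_le => _ [k /= Nk <-].
by exists k => //; apply: NV; rewrite /= ltnW.
Qed.

Lemma LS_ub u N : (limn_esup u <= ereal_sup [set u k | k in [set k | (N < k)%N]])%E.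
Proof.
rewrite /limn_esup /limf_esup; apply: ereal_inf_lbound.
exists [set k | (N < k)%N] => //; exists N.+1 => //.
Qed.

Lemma LS_freq u (b : \bar R) : (forall N, exists2 k, (N < k)%N & (b <= u k)%E) ->
  (b <= limn_esup u)%E.
Proof.
move=> h; apply: LS_lb => N; have [k Nk bk] := h N.
by apply: le_trans bk _; apply: ereal_sup_ubound; exists k.
Qed.

Lemma LS_ev_lt u (a : \bar R) : (limn_esup u < a)%E ->
  exists N, forall K, (N <= K)%N -> (ereal_sup [set u k | k in [set k | (K < k)%N]] < a)%E.
Proof.
rewrite /limn_esup /limf_esup => /ereal_inf_lt [_ [V [N _ NV] <-]] Va.
exists N => K NK; apply: le_lt_trans Va; apply: ereal_sup_le => _ [k /= Kk <-].
by exists k => //; apply: NV; rewrite /= (leq_trans NK) // ltnW.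
Qed.

Lemma lee_eta (a : R) (z : \bar R) : (forall eta : R, 0 < eta -> ((a - eta)%:E <= z)%E) ->
  (a%:E <= z)%E.
Proof.
move=> h; case: z h => [z| |] h //.
- rewrite lee_fin; apply/ler_addgt0Pr => e e0; have := h e e0; rewrite lee_fin; lra.
- by rewrite leey.
- by have := h 1 ltr01.
Qed.

End LS.

Lemma dbig_recr (R : realType) (F : nat -> \bar R) n :
  \big[dual_adde/0%E]_(1 <= k < n.+2) F k = dual_adde (\big[dual_adde/0%E]_(1 <= k < n.+1) F k) (F n.+1).
Proof. exact: (@big_nat_recr (\bar^d R) 0%R (@GRing.add (\bar^d R)) n.+1 1 F). Qed.

Lemma daddEFin (R : realType) (a b : R) : dual_adde a%:E b%:E = (a + b)%:E.
Proof. exact: (esym (dEFinD a b)). Qed.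

Lemma dadd_y (R : realType) (x : \bar R) : dual_adde x +oo%E = +oo%E.
Proof. by case: x. Qed.
Lemma dadd_yl (R : realType) (x : \bar R) : dual_adde +oo%E x = +oo%E.
Proof. by case: x. Qed.
Lemma dadd_le (R : realType) (a b c d : \bar R) : (a <= b)%E -> (c <= d)%E ->
  (dual_adde a c <= dual_adde b d)%E.
Proof. exact: lee_dD. Qed.
Arguments dadd_le {R a b c d}.

Section LagB.
Variable R : realType.
Variable X : normedModType R.
Variable f : nat -> X -> \bar R.
Hypothesis hNy : forall k x, f k x != -oo%E.
Hypothesis hcv : forall k, convex_fun (f k).

Definition Pseq (lam : nat -> R) (K : nat) := \sum_(1 <= k < K.+1) lam k.
Definition linf_of (lam : nat -> R) := lam 0%N - sup (range (Pseq lam)).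

Lemma cmul_y (t : R) : 0 <= t -> cmul t +oo%E = +oo%E.
Proof.
move=> t0; rewrite /cmul eqxx andbT; case: eqP => // /eqP tn0.
by rewrite mulry gtr0_sg ?mul1e // lt_neqAle eq_sym tn0 t0.
Qed.

Lemma cmul_fin (t r : R) : cmul t r%:E = (t * r)%:E.
Proof. by rewrite /cmul andbF. Qed.

Lemma psum_fin lam x n : good f x ->
  psum f lam x n = (\sum_(1 <= k < n.+1) lam k * fr f k x)%:E.
Proof.
move=> gx; elim: n => [|n IH]; first by rewrite /psum !big_geq.
have -> : psum f lam x n.+1 = dual_adde (psum f lam x n) (cmul (lam n.+1) (f n.+1 x)).
  by rewrite /psum dbig_recr.
rewrite IH.
rewrite -(fineK (@good_fin R X f hNy n.+1 x gx)) cmul_fin daddEFin.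
by rewrite [in RHS]big_nat_recr.
Qed.

Lemma psum_y lam x k n : (forall j, (0 < j)%N -> 0 <= lam j) -> (0 < k)%N -> (k <= n)%N ->
  f k x = +oo%E -> psum f lam x n = +oo%E.
Proof.
move=> l0 k0 kn fk; elim: n kn => [|n IH]; first by rewrite leqn0 => /eqP k00; rewrite k00 in k0.
have -> : psum f lam x n.+1 = dual_adde (psum f lam x n) (cmul (lam n.+1) (f n.+1 x)).
  by rewrite /psum dbig_recr.
rewrite leq_eqVlt => /orP[/eqP <-|].
  by rewrite fk cmul_y ?l0 // dadd_y.
by rewrite ltnS => /IH ->; rewrite dadd_yl.
Qed.

Lemma final_combine (a b c : R) (L e : \bar R) : e = c%:E -> ((b - a - c)%:E <= L)%E ->
  (b%:E <= dual_adde (dual_adde a%:E L) e)%E.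
Proof.
move=> -> H.
have H2 := dadd_le (dadd_le (lexx a%:E) H) (lexx c%:E).
rewrite !daddEFin in H2.
apply: le_trans H2; rewrite lee_fin; lra.
Qed.

Lemma Pseq_mono lam K L : (forall j, 0 <= lam j) -> (K <= L)%N -> Pseq lam K <= Pseq lam L.
Proof.
move=> l0 KL; rewrite /Pseq (big_cat_nat (_ : (1 <= K.+1)%N) (_ : (K.+1 <= L.+1)%N)) //=.
by rewrite lerDl; exact: sumr_ge0.
Qed.

Lemma lag_bound (lam : nat -> R) (eps V : R) :
  (forall k, 0 <= lam k) -> (forall K, \sum_(1 <= k < K.+1) lam k <= lam 0%N) ->
  (forall x, good f x -> forall K, 0 <= fr f 0 x - V + \sum_(1 <= k < K.+1) lam k * (fr f k x - eps)
          + (lam 0%N - \sum_(1 <= k < K.+1) lam k) * (tr f K x - eps)) ->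
  ell1_pos lam /\ 0 <= linf_of lam /\
  forall x, ((V + eps * lam 0%N)%:E <= Lag f x lam (linf_of lam))%E.
Proof.
move=> l0 lP lI.
have hub : has_ubound (range (Pseq lam)) by exists (lam 0%N) => _ [K _ <-]; exact: lP.
set sP := sup (range (Pseq lam)).
have Ple K : Pseq lam K <= sP by apply: (ub_le_sup hub); exists K.
have sPle : sP <= lam 0%N by apply: ge_sup; [exists (Pseq lam 0); exists 0%N|move=> _ [K _ <-]; exact: lP].
have P0 K : 0 <= Pseq lam K by exact: sumr_ge0.
have dK eta : 0 < eta -> exists K0, forall K, (K0 <= K)%N -> sP - Pseq lam K <= eta.
  move=> e0; have [_ [K0 _ <-] hK0] := sup_adherent e0 (conj (ex_intro _ _ (ex_intro2 _ _ 0%N I erefl)) hub).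
  exists K0 => K K0K; have := @Pseq_mono lam K0 K l0 K0K; rewrite -/sP in hK0; lra.
split.
  split; first by move=> k _.
  apply: le_lt_trans (ltry (lam 0%N)).
  apply: lime_le; first by apply: is_cvg_ereal_nneg_natsum => n _; rewrite lee_fin.
  apply: nearW => n; rewrite sumEFin lee_fin.
  case: n => [|n]; first by rewrite big_geq.
  under eq_bigr do rewrite ger0_norm //; exact: lP.
split; first by rewrite /linf_of -/sP; lra.
move=> x.
set linf := linf_of lam.
have linf0 : 0 <= linf by rewrite /linf /linf_of -/sP; lra.
have [f0y|f0fin] := eqVneq (f 0%N x) +oo%E.
  by rewrite /Lag f0y !dadd_yl leey.
have f0lt : (f 0%N x < +oo)%E by rewrite ltey.
have [tl0|tl0] := leP +oo%E (tl f 0 x).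
  have [[k [k0 fk]]|allfin] := pselect (exists k, (0 < k)%N /\ f k x = +oo%E).
    have : limn_esup (psum f lam x) = +oo%E.
      apply/eqP; rewrite eq_le leey /=; apply: LS_freq => N.
      exists (maxn N.+1 k); first by rewrite leq_max ltnSn.
      by rewrite (@psum_y lam x k _ (fun j _ => l0 j) k0 _ fk) // leq_maxr.
    by rewrite /Lag => ->; rewrite dadd_y dadd_yl leey.
  have tlN N : tl f N x = +oo%E.
    elim: N => [|N IH]; first by apply/eqP; rewrite eq_le leey.
    apply/eqP; rewrite eq_le leey /= leNgt; apply/negP => tlt.
    have fN : (f N.+1 x < +oo)%E.
      rewrite ltey; apply/negP => /eqP fy; apply: allfin; exists N.+1; split => //.
    have : (tl f N x <= maxe (f N.+1 x) (tl f N.+1 x))%E.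
      apply: ge_ereal_sup => _ [k /= Nk <-].
      rewrite le_max; move: Nk; rewrite leq_eqVlt => /orP[/eqP <-|Nk]; first by rewrite lexx.
      by rewrite (@f_le_tl R X f k N.+1 x Nk) orbT.
    rewrite IH leye_eq => /eqP; rewrite /maxe; case: ifP => _ yy.
      by move: tlt; rewrite yy ltxx.
    by move: fN; rewrite yy ltxx.
  have : f_infty f x = +oo%E.
    apply/eqP; rewrite eq_le leey /=; apply: LS_lb => N.
    by rewrite -/(tl f N x) tlN.
  by rewrite /Lag => ->; rewrite cmul_y // dadd_y leey.
have gx : good f x by split.
set S := fun n => \sum_(1 <= k < n.+1) lam k * fr f k x.
have psE n : psum f lam x n = (S n)%:E by exact: psum_fin.
set fr0 := fr f 0 x.
have f0E : f 0%N x = fr0%:E by rewrite /fr0 /fr fineK // (@good_fin R X f hNy 0 x gx).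
set Vw := V + eps * lam 0%N.
have ineq K : Vw <= fr0 + S K + (lam 0%N - Pseq lam K) * tr f K x.
  have := lI x gx K.
  have -> : \sum_(1 <= k < K.+1) lam k * (fr f k x - eps) = S K - eps * Pseq lam K.
    by rewrite /S /Pseq mulr_sumr -sumrB; apply: eq_bigr => k _; ring.
  rewrite /Vw /Pseq -/fr0.
  move: (\sum_(1 <= k < K.+1) lam k) (S K) (tr f K x) => P SK t H; rewrite -subr_ge0.
  have -> : fr0 + SK + (lam 0%N - P) * t - (V + eps * lam 0%N) =
    fr0 - V + (SK - eps * P) + (lam 0%N - P) * (t - eps) by ring.
  exact: H.
set c := Num.max (tr f 0 x) 0.
have c0 : 0 <= c by rewrite /c le_max lexx orbT.
have tc K : tr f K x <= c.
  apply: le_trans (@tr_mono R X f hNy 0 K x gx (leq0n K)) _.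
  by rewrite /c le_max lexx.
have SKle K : S K <= Pseq lam K * c.
  rewrite /S /Pseq mulr_suml; apply: ler_sum_nat => k /andP[k0 _].
  apply: ler_wpM2l => //; apply: le_trans (tc 0%N).
  exact: (@fr_le_tr R X f hNy k 0 x gx k0).
have fi_lt : (f_infty f x < +oo)%E.
  have h := @LS_ub R (fun k => f k x) 0.
  exact: le_lt_trans h tl0.
have trlt K (a : R) : (tl f K x < a%:E)%E -> tr f K x < a.
  by rewrite -(fineK (@good_tfin R X f hNy K x gx)) lte_fin.
have linfE : linf = lam 0%N - sP by [].
have rho K : (lam 0%N - Pseq lam K) * tr f K x <= linf * tr f K x + (sP - Pseq lam K) * c.
  have -> : lam 0%N - Pseq lam K = linf + (sP - Pseq lam K) by rewrite linfE; ring.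
  rewrite mulrDl lerD2l; apply: ler_wpM2l; [have := Ple K; lra| exact: tc].
rewrite /Lag -/linf f0E.
have [l00|lpos] := eqVneq linf 0.
  apply: final_combine.
    by rewrite l00 /cmul eqxx (lt_eqF fi_lt) /= mul0e.
  apply: lee_eta => eta e0.
  set eta' := eta / (c + 1).
  have e'0 : 0 < eta' by rewrite divr_gt0 //; lra.
  have e'c : eta' * c <= eta.
    have : eta' * (c + 1) = eta by rewrite /eta' divfK // gt_eqF //; lra.
    have : eta' * c <= eta' * (c + 1) by apply: ler_wpM2l; lra.
    lra.
  have [K0 hK0] := dK eta' e'0.
  apply: LS_freq => N; exists (maxn N.+1 K0); first by rewrite leq_max ltnSn.
  set K := maxn N.+1 K0.
  rewrite psE lee_fin.
  have dle := hK0 K (leq_maxr _ _).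
  have := ineq K; have := rho K; rewrite l00 mul0r add0r.
  have : (sP - Pseq lam K) * c <= eta' * c by apply: ler_wpM2r.
  lra.
have lpos' : 0 < linf by rewrite lt_neqAle eq_sym lpos linf0.
have cmE a : cmul linf a = (linf%:E * a)%E by rewrite /cmul (negbTE lpos).
rewrite cmE.
case E : (f_infty f x) => [phi| |].
- apply: (@final_combine _ _ (linf * phi)); first by rewrite EFinM.
  apply: lee_eta => eta e0.
  set eta1 := eta / 2 / (linf + 1).
  set eta2 := eta / 2 / (c + 1).
  have e10 : 0 < eta1 by rewrite !divr_gt0 //; lra.
  have e20 : 0 < eta2 by rewrite !divr_gt0 //; lra.
  have e1l : linf * eta1 <= eta / 2.
    have : eta1 * (linf + 1) = eta / 2 by rewrite /eta1 divfK // gt_eqF //; lra.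
    have : eta1 * linf <= eta1 * (linf + 1) by apply: ler_wpM2l; lra.
    rewrite mulrC; lra.
  have e2c : eta2 * c <= eta / 2.
    have : eta2 * (c + 1) = eta / 2 by rewrite /eta2 divfK // gt_eqF //; lra.
    have : eta2 * c <= eta2 * (c + 1) by apply: ler_wpM2l; lra.
    lra.
  have [N1 hN1] : exists N, forall K, (N <= K)%N -> (tl f K x < (phi + eta1)%:E)%E.
    by apply: (@LS_ev_lt R (fun k => f k x)); rewrite -/(f_infty f x) E lte_fin; lra.
  have [K0 hK0] := dK eta2 e20.
  apply: LS_freq => N; exists (maxn N.+1 (maxn N1 K0)); first by rewrite leq_max ltnSn.
  set K := maxn N.+1 (maxn N1 K0).
  rewrite psE lee_fin.
  have NK : (N1 <= K)%N by rewrite /K !leq_max leqnn orbT.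
  have KK : (K0 <= K)%N by rewrite /K !leq_max leqnn !orbT.
  have tK := trlt _ _ (hN1 K NK).
  have dle := hK0 K KK.
  have h1 : linf * tr f K x <= linf * (phi + eta1) by apply: ler_wpM2l => //; exact: ltW.
  have h2 : (sP - Pseq lam K) * c <= eta2 * c by apply: ler_wpM2r.
  have := ineq K; have := rho K.
  rewrite mulrDr in h1.
  lra.
- by move: fi_lt; rewrite E ltxx.
- exfalso.
  set M := (Vw - fr0 - 2 * lam 0%N * c) / linf.
  have [N hN] : exists N, forall K, (N <= K)%N -> (tl f K x < M%:E)%E.
    by apply: (@LS_ev_lt R (fun k => f k x)); rewrite -/(f_infty f x) E ltNye.
  have tN := trlt _ _ (hN N (leqnn N)).
  have h1 : linf * tr f N x < linf * M by rewrite ltr_pM2l.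
  have h2 : linf * M = Vw - fr0 - 2 * lam 0%N * c by rewrite /M mulrC divfK.
  have h3 : Pseq lam N * c <= lam 0%N * c by apply: ler_wpM2r => //; exact: lP.
  have h4 : (sP - Pseq lam N) * c <= lam 0%N * c.
    by apply: ler_wpM2r => //; have := P0 N; lra.
  have := ineq N; have := rho N; have := SKle N.
  lra.
Qed.

End LagB.

Section LagM.
Variable R : realType.
Variable X : normedModType R.
Variable f : nat -> X -> \bar R.
Hypothesis hNy : forall k x, f k x != -oo%E.
Hypothesis hcv : forall k, convex_fun (f k).

Lemma ser_ge (F : nat -> \bar R) m j : (forall k, (m <= k)%N -> (0 <= F k)%E) ->
  (\sum_(m <= k < j) F k <= \sum_(m <= k <oo) F k)%E.
Proof. by move=> F0; exact: (@nneseries_lim_ge R F xpredT m j (fun n mn _ => F0 n mn)). Qed.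

Lemma cmul_ge0 (t : R) (a : \bar R) : 0 <= t -> (0 <= a)%E -> (0 <= cmul t a)%E.
Proof.
move=> t0 a0; rewrite /cmul; case: ifP => // _; exact: mule_ge0.
Qed.

Lemma fplus_ge0 k x : (0 <= fplus f k x)%E.
Proof. by rewrite /fplus le_max lexx orbT. Qed.

Lemma fplus_fin k x : f k x \is a fin_num -> fplus f k x = (Num.max (fine (f k x)) 0)%:E.
Proof.
move=> fk; rewrite /fplus -{1}(fineK fk) EFin_max //.
Qed.

Lemma final_upper (a b c : R) (L e : \bar R) : e = c%:E -> (L <= (b - a - c)%:E)%E ->
  (dual_adde (dual_adde a%:E L) e <= b%:E)%E.
Proof.
move=> -> H.
have H2 := dadd_le (dadd_le (lexx a%:E) H) (lexx c%:E).
rewrite !daddEFin in H2.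
apply: le_trans H2 _; rewrite lee_fin; lra.
Qed.

Lemma lagm_feas (lam : nat -> R) m x : (forall k, (0 < k)%N -> 0 <= lam k) ->
  (forall k, (0 < k)%N -> (f k x <= 0)%E) -> (Lag_m f m x lam <= f 0%N x)%E.
Proof.
move=> l0 fx.
have [f0y|f0fin] := eqVneq (f 0%N x) +oo%E; first by rewrite f0y leey.
have gx : good f x.
  split; first by rewrite ltey.
  apply: le_lt_trans (ltry 0); apply: ge_ereal_sup => _ [k /= k0 <-]; exact: fx.
have frle k : (0 < k)%N -> fr f k x <= 0.
  by move=> k0; have := fx k k0; rewrite -(fineK (@good_fin R X f hNy k x gx)) lee_fin.
rewrite /Lag_m.
have -> : (\sum_(m.+1 <= k <oo) cmul (lam k) (fplus f k x))%E = 0%E.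
  apply: eseries0 => k mk _.
  rewrite fplus_fin ?(@good_fin R X f hNy k x gx) //.
  rewrite max_r ?cmul_fin ?mulr0 //; exact: (frle k (leq_ltn_trans (leq0n m) mk)).
rewrite -/(psum f lam x m) psum_fin //.
have -> : f 0%N x = (fr f 0 x)%:E by rewrite /fr fineK // (@good_fin R X f hNy 0 x gx).
apply: final_upper => //.
rewrite lee_fin subrr subr0 big_seq; apply: sumr_le0 => k; rewrite mem_index_iota => /andP[k0 _].
by rewrite mulr_ge0_le0 //; [exact: l0|exact: frle].
Qed.


Lemma tlN_y x : (tl f 0 x = +oo)%E -> (forall k, (0 < k)%N -> f k x != +oo%E) ->
  forall N, tl f N x = +oo%E.
Proof.
move=> tl0 allfin; elim => [//|N IH].
apply/eqP; rewrite eq_le leey /= leNgt; apply/negP => tlt.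
have fN : (f N.+1 x < +oo)%E by rewrite ltey; exact: allfin.
have : (tl f N x <= maxe (f N.+1 x) (tl f N.+1 x))%E.
  apply: ge_ereal_sup => _ [k /= Nk <-].
  rewrite le_max; move: Nk; rewrite leq_eqVlt => /orP[/eqP <-|Nk]; first by rewrite lexx.
  by rewrite (@f_le_tl R X f k N.+1 x Nk) orbT.
rewrite IH leye_eq => /eqP; rewrite /maxe; case: ifP => _ yy.
  by move: tlt; rewrite yy ltxx.
by move: fN; rewrite yy ltxx.
Qed.

Lemma all_le_y (z : \bar R) : (forall M : R, (M%:E <= z)%E) -> z = +oo%E.
Proof.
move=> h; case: z h => [r| |] h //.
  by have := h (r + 1); rewrite lee_fin => H; exfalso; lra.
by have := h 0.
Qed.

Lemma dadd_Ny (y : \bar R) : y != +oo%E -> dual_adde y -oo%E = -oo%E.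
Proof. by case: y. Qed.

Lemma lag_le_lagm (lam : nat -> R) (linf : R) m x : (forall k, (0 < k)%N -> 0 <= lam k) ->
  0 <= linf -> (Lag f x lam linf <= Lag_m f m x (lam_hat lam linf m))%E.
Proof.
move=> l0 linf0.
set beta := linf + (if (0 < linf) then 0 else 1).
have b0 : 0 < beta by rewrite /beta; case: (ltP 0 linf) => h; lra.
have blinf : linf <= beta by rewrite /beta; case: (ltP 0 linf) => h; lra.
set lamh := lam_hat lam linf m.
have lamhE k : (m < k)%N -> lamh k = lam k + beta.
  by move=> mk; rewrite /lamh /lam_hat leqNgt mk /= /beta addrA.
have lamhE' k : (k <= m)%N -> lamh k = lam k by move=> km; rewrite /lamh /lam_hat km.
have lh0 k : (0 < k)%N -> 0 <= lamh k.
  move=> k0; case: (leqP k m) => km; first by rewrite lamhE' //; exact: l0.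
  by rewrite lamhE //; have := l0 k k0; lra.
have F0 k : (m.+1 <= k)%N -> (0 <= cmul (lamh k) (fplus f k x))%E.
  move=> mk; apply: cmul_ge0; [apply: lh0; exact: leq_ltn_trans (leq0n m) mk|exact: fplus_ge0].
set T := (\sum_(m.+1 <= k <oo) cmul (lamh k) (fplus f k x))%E.
have T0 : (0 <= T)%E.
  have := @ser_ge _ (m.+1) (m.+1) F0; rewrite big_geq //.
have [f0y|f0fin] := eqVneq (f 0%N x) +oo%E.
  by rewrite /Lag_m f0y !dadd_yl leey.
have [[k [k0 fk]]|allfin] := pselect (exists k, (0 < k)%N /\ f k x = +oo%E).
  case: (leqP k m) => km.
    have := @psum_y R X f lamh x k m lh0 k0 km fk.
    by rewrite /Lag_m -/(psum f lamh x m) => ->; rewrite dadd_y dadd_yl leey.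
  have Ty : T = +oo%E.
    apply/eqP; rewrite eq_le leey /=.
    apply: le_trans (@ser_ge _ (m.+1) (k.+1) F0).
    have fpk : fplus f k x = +oo%E by rewrite /fplus fk maxye.
    rewrite big_nat_recr //= fpk.
    rewrite cmul_y; last by apply: lh0.
    rewrite addey // gt_eqF //; apply: (lt_le_trans (ltNyr 0)).
    by rewrite big_seq; apply: sume_ge0 => j; rewrite mem_index_iota => /andP[mj _]; apply: F0.
  by rewrite /Lag_m -/T Ty dadd_y leey.
have allfin' k : (0 < k)%N -> f k x != +oo%E.
  by move=> k0; apply/negP => /eqP fk; apply: allfin; exists k.
have f0lt : (f 0%N x < +oo)%E by rewrite ltey.
have [tl0|tl0] := leP +oo%E (tl f 0 x).
  have tly : tl f 0 x = +oo%E by apply/eqP; rewrite eq_le leey.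
  have tlm := @tlN_y x tly allfin' m.
  have Ty : T = +oo%E.
    apply: all_le_y => M.
    have : ((M / beta)%:E < tl f m x)%E by rewrite tlm ltry.
    move=> /ereal_sup_gt [_ [k /= mk <-] hk].
    have k0 : (0 < k)%N := leq_ltn_trans (leq0n m) mk.
    have fkfin : f k x \is a fin_num by rewrite fin_numE hNy allfin'.
    apply: le_trans (@ser_ge _ m.+1 k.+1 F0).
    rewrite big_nat_recr //=.
    apply: le_trans (leeDr _ _); last first.
      by rewrite big_seq; apply: sume_ge0 => j; rewrite mem_index_iota => /andP[mj _]; apply: F0.
    rewrite fplus_fin // cmul_fin lee_fin (lamhE k mk).
    have hk' : M / beta < fine (f k x) by rewrite -lte_fin fineK.
    move: hk'; rewrite ltr_pdivrMr // => hk'.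
    have h1 : fine (f k x) * beta <= Num.max (fine (f k x)) 0 * beta.
      by apply: ler_wpM2r; [exact: ltW|rewrite le_max lexx].
    have h2 : Num.max (fine (f k x)) 0 * beta <= (lam k + beta) * Num.max (fine (f k x)) 0.
      rewrite mulrC; apply: ler_wpM2r; first by rewrite le_max lexx orbT.
      by have := l0 k k0; lra.
    lra.
  by rewrite /Lag_m -/T Ty dadd_y leey.
have gx : good f x by split.
set fr0 := fr f 0 x.
have f0E : f 0%N x = fr0%:E by rewrite /fr0 /fr fineK // (@good_fin R X f hNy 0 x gx).
set p := fun k => Num.max (fr f k x) 0.
have p0 k : 0 <= p k by rewrite /p le_max lexx orbT.
have fpE k : fplus f k x = (p k)%:E by rewrite fplus_fin // (@good_fin R X f hNy k x gx).
have [Ty|Tny] := eqVneq T +oo%E.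
  by rewrite /Lag_m -/T Ty dadd_y leey.
have Tfin : T \is a fin_num by rewrite fin_numE Tny andbT gt_eqF // (lt_le_trans (ltNyr 0) T0).
set tau := fine T.
have TE : T = tau%:E by rewrite /tau fineK.
set A := \sum_(1 <= k < m.+1) lam k * fr f k x.
have LmE : Lag_m f m x lamh = (fr0 + A + tau)%:E.
  rewrite /Lag_m -/(psum f lamh x m) psum_fin // -/T TE f0E !daddEFin.
  congr ((_ + _ + _)%:E); apply: eq_big_nat => k /andP[_ km].
  by rewrite lamhE'.
rewrite LmE.
set S := fun n => \sum_(1 <= k < n.+1) lam k * fr f k x.
have psE n : psum f lam x n = (S n)%:E by exact: psum_fin.
set Q := fun n => \sum_(m.+1 <= k < n.+1) lam k * p k.
have Ii n : (m <= n)%N -> S n <= A + Q n.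
  move=> mn; rewrite /S /A /Q (big_cat_nat (_ : (1 <= m.+1)%N) (_ : (m.+1 <= n.+1)%N)) //= lerD2l.
  apply: ler_sum_nat => k /andP[mk _]; apply: ler_wpM2l; first exact: l0 (leq_ltn_trans (leq0n m) mk).
  by rewrite /p le_max lexx.
have Iii n j : (m <= n)%N -> (n < j)%N -> Q n + beta * p j <= tau.
  move=> mn nj.
  have := @ser_ge _ m.+1 j.+1 F0; rewrite -/T TE.
  have -> : (\sum_(m.+1 <= k < j.+1) cmul (lamh k) (fplus f k x))%E = (\sum_(m.+1 <= k < j.+1) lamh k * p k)%:E.
    by rewrite -sumEFin; apply: eq_bigr => k _; rewrite fpE cmul_fin.
  rewrite lee_fin big_nat_recr //=; last exact: leq_ltn_trans mn nj.
  rewrite (big_cat_nat (_ : (m.+1 <= n.+1)%N) (_ : (n.+1 <= j)%N)) //=.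
  have h1 : Q n <= \sum_(m.+1 <= k < n.+1) lamh k * p k.
    apply: ler_sum_nat => k /andP[mk _]; apply: ler_wpM2r => //.
    by rewrite lamhE //; lra.
  have h2 : 0 <= \sum_(n.+1 <= k < j) lamh k * p k.
    rewrite big_seq; apply: sumr_ge0 => k; rewrite mem_index_iota => /andP[nk _].
    apply: mulr_ge0 => //; apply: lh0; exact: leq_ltn_trans (leq0n n) nk.
  have h3 : beta * p j <= lamh j * p j.
    apply: ler_wpM2r => //; rewrite lamhE; last exact: leq_ltn_trans mn nj.
    by have := l0 j (leq_ltn_trans (leq0n n) nj); lra.
  lra.
have G1 n : (m <= n)%N -> S n <= A + tau.
  move=> mn; have := Ii n mn; have := Iii n n.+1 mn (ltnSn n).
  have := mulr_ge0 (ltW b0) (p0 n.+1); lra.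
have supb : (limn_esup (psum f lam x) <= (A + tau)%:E)%E.
  apply: le_trans (@LS_ub R (psum f lam x) m) _; apply: ge_ereal_sup => _ [n /= mn <-].
  by rewrite psE lee_fin; apply: G1; exact: ltnW.
have fi_lt : (f_infty f x < +oo)%E.
  have h := @LS_ub R (fun k => f k x) 0.
  exact: le_lt_trans h tl0.
rewrite /Lag f0E.
have [l00|lpos] := eqVneq linf 0.
  apply: (@final_upper _ _ 0).
    by rewrite l00 /cmul eqxx (lt_eqF fi_lt) /= mul0e.
  by apply: le_trans supb _; rewrite lee_fin; lra.
have lpos' : 0 < linf by rewrite lt_neqAle eq_sym lpos linf0.
have cmE a : cmul linf a = (linf%:E * a)%E by rewrite /cmul (negbTE lpos).
rewrite cmE.
case E : (f_infty f x) => [phi| |].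
- apply: (@final_upper _ _ (linf * phi)); first by rewrite EFinM.
  apply: le_trans (@LS_ub R (psum f lam x) m) _; apply: ge_ereal_sup => _ [n /= mn <-].
  rewrite psE lee_fin.
  apply/ler_addgt0Pr => e e0.
  have : ((phi - e / linf)%:E < tl f n x)%E.
    apply: lt_le_trans (@LS_ub R (fun k => f k x) n).
    rewrite -/(f_infty f x) E lte_fin.
    have : 0 < e / linf by rewrite divr_gt0.
    lra.
  move=> /ereal_sup_gt [_ [j /= nj <-] hj].
  have frj : phi - e / linf < fr f j x by rewrite -lte_fin /fr fineK // (@good_fin R X f hNy j x gx).
  have := Ii n (ltnW mn); have := Iii n j (ltnW mn) nj.
  have h1 : linf * fr f j x <= beta * p j.
    apply: le_trans (_ : linf * p j <= _).
      by apply: ler_wpM2l => //; rewrite /p le_max lexx.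
    by apply: ler_wpM2r.
  have h2 : linf * (phi - e / linf) < linf * fr f j x by rewrite ltr_pM2l.
  have h3 : linf * (phi - e / linf) = linf * phi - e by field; rewrite gt_eqF.
  lra.
- by move: fi_lt; rewrite E ltxx.
- rewrite mulrNy gtr0_sg // mul1e dadd_Ny ?leNye //.
  rewrite -ltey; apply: le_lt_trans (dadd_le (lexx fr0%:E) supb) _.
  by rewrite daddEFin ltry.
Qed.


End LagM.

Section Main.
Variable R : realType.
Variable X : normedModType R.
Variable f : nat -> X -> \bar R.
Hypothesis hNy : forall k x, f k x != -oo%E.
Hypothesis hcv : forall k, convex_fun (f k).

Lemma ell1_bnd (lam : nat -> R) : ell1_pos lam -> exists M, forall k, (0 < k)%N -> `|lam k| <= M.
Proof.
move=> [l0 hs].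
set Sr := (\sum_(1 <= k <oo) (`|lam k|)%:E)%E in hs.
have Sr0 : (0 <= Sr)%E by apply: nneseries_ge0 => n _ _; rewrite lee_fin normr_ge0.
have Srfin : Sr \is a fin_num by rewrite ge0_fin_numE.
exists (fine Sr) => k k0.
rewrite -lee_fin fineK //.
have hge : forall n, (1 <= n)%N -> xpredT n -> (0 <= (`|lam n|)%:E)%E.
  by move=> n _ _; rewrite lee_fin normr_ge0.
apply: le_trans (@nneseries_lim_ge R (fun j => (`|lam j|)%:E) xpredT 1 k.+1 hge).
by rewrite big_nat_recr //= leeDr //; rewrite big_seq; apply: sume_ge0 => j _; rewrite lee_fin normr_ge0.
Qed.

Lemma lamhat_inf (lam : nat -> R) (linf : R) m : ell1_pos lam -> 0 <= linf ->
  ellinf_pos (lam_hat lam linf m).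
Proof.
move=> hl linf0; have [M hM] := @ell1_bnd lam hl; have [l0 _] := hl.
split.
  move=> k k0; rewrite /lam_hat; case: ifP => _; first exact: l0.
  by have := l0 k k0; case: (ltP 0 linf) => _; lra.
exists (M + linf + 1) => k k0.
have hk := hM k k0; have lk := l0 k k0; rewrite ger0_norm // in hk.
rewrite /lam_hat; case: ifP => _.
  by rewrite ger0_norm //; lra.
by case: (ltP 0 linf) => _; rewrite ger0_norm; lra.
Qed.

Lemma dualD_le_dualDm (lam : nat -> R) (linf : R) m : ell1_pos lam -> 0 <= linf ->
  (dualD_obj f lam linf <= dualDm_obj f m (lam_hat lam linf m))%E.
Proof.
move=> [l0 _] linf0; apply: le_ereal_inf_tmp => _ [x _ <-].
apply: le_trans (@lag_le_lagm R X f hNy lam linf m x l0 linf0).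
by apply: ereal_inf_lbound; exists x.
Qed.

Lemma vD_le_vDm m : (vD f <= vDm f m)%E.
Proof.
apply: ge_ereal_sup => _ [[lam linf] /= [hl linf0] <-].
apply: le_trans (@dualD_le_dualDm lam linf m hl linf0) _.
apply: ereal_sup_ubound; exists (lam_hat lam linf m) => //.
exact: lamhat_inf.
Qed.

Lemma vDm_le_vP m : (vDm f m <= vP f)%E.
Proof.
apply: ge_ereal_sup => _ [lam [l0 _] <-].
apply: le_ereal_inf_tmp => _ [x /= fx <-].
apply: le_trans (@lagm_feas R X f hNy lam m x l0 fx).
by apply: ereal_inf_lbound; exists x.
Qed.


Lemma dual_bound (eps : R) (xb : X) (delta : R) :
  (-oo < vfun f eps)%E -> (vfun f eps < +oo)%E -> 0 < delta -> (f 0%N xb < +oo)%E ->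
  (forall k, (0 < k)%N -> (f k xb <= (eps - delta)%:E)%E) ->
  exists lam linf, ell1_pos lam /\ 0 <= linf /\
    ((fine (vfun f eps) + eps * lam 0%N)%:E <= dualD_obj f lam linf)%E /\ 0 <= lam 0%N.
Proof.
move=> vNy vy d0 f0b slb.
set V := fine (vfun f eps).
have vE : vfun f eps = V%:E by rewrite /V fineK // fin_numE -ltNye vNy -ltey vy.
have Vle x : good f x -> (forall k, (0 < k)%N -> (f k x <= eps%:E)%E) -> V <= fr f 0 x.
  move=> gx fx.
  have : (vfun f eps <= f 0%N x)%E by apply: ereal_inf_lbound; exists x.
  by rewrite vE -(fineK (@good_fin R X f hNy 0 x gx)) lee_fin.
have [lam [l0 [lP lI]]] := @core R X f hNy hcv eps V delta xb Vle d0 f0b slb.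
have [hl [linf0 hL]] := @lag_bound R X f hNy lam eps V l0 lP lI.
exists lam, (@linf_of R lam); split => //; split => //; split; last exact: l0.
by apply: le_ereal_inf_tmp => _ [x _ <-]; exact: hL.
Qed.


Lemma le_from_reals (a b : \bar R) : (forall r : R, (r%:E < a)%E -> (r%:E <= b)%E) -> (a <= b)%E.
Proof.
move=> h; case: a h => [s| |] h; case: b h => [t| |] h //; rewrite ?leey ?leNye //.
- rewrite lee_fin leNgt; apply/negP => ts.
  have h1 : (((s + t) / 2)%:E < s%:E)%E by rewrite lte_fin; lra.
  by have := h _ h1; rewrite lee_fin; lra.
- have h1 : ((s - 1)%:E < s%:E)%E by rewrite lte_fin; lra.
  by have := h _ h1.
- have := h (t + 1) (ltry _); rewrite lee_fin => H; exfalso; lra.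
- by have := h 0 (ltry _).
Qed.

Lemma cl_le_vD (x0 : X) : (f 0%N x0 < +oo)%E -> (forall k, (0 < k)%N -> (f k x0 <= 0)%E) ->
  (cl_vfun f 0 <= vD f)%E.
Proof.
move=> f0x0 fx0.
apply: ge_ereal_sup => _ [g [lscg gle] <-].
apply: le_from_reals => r hr.
have [V nV hV] := lscg 0 r hr.
move: nV => /nbhs_ballP [e /= e0 heV].
set eps := e / 2.
have eps0 : 0 < eps by rewrite divr_gt0.
have Veps : V eps.
  apply: heV; rewrite /ball /= sub0r normrN ger0_norm; last exact: ltW.
  by rewrite /eps; lra.
have rv : (r%:E < vfun f eps)%E by apply: lt_le_trans (hV _ Veps) (gle eps).
have vy : (vfun f eps < +oo)%E.
  apply: le_lt_trans f0x0; apply: ereal_inf_lbound; exists x0 => //= k k0.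
  by apply: le_trans (fx0 k k0) _; rewrite lee_fin ltW.
have slb k : (0 < k)%N -> (f k x0 <= (eps - eps)%:E)%E by move=> k0; rewrite subrr; exact: fx0.
have [lam [linf [hl [linf0 [hb l00]]]]] :=
  @dual_bound eps x0 eps (lt_trans (ltNyr r) rv) vy eps0 f0x0 slb.
apply: le_trans (_ : (dualD_obj f lam linf <= _)%E); last first.
  by apply: ereal_sup_ubound; exists (lam, linf).
apply: le_trans hb; rewrite lee_fin.
have : r < fine (vfun f eps).
  by rewrite -lte_fin fineK // fin_numE -ltNye (lt_trans (ltNyr r) rv) -ltey vy.
have := mulr_ge0 (ltW eps0) l00; lra.
Qed.

End Main.

Local Open Scope ereal_scope.

Theorem theorem3p4 (R : realType) (X : completeNormedModType R)
  (f : nat -> X -> \bar R)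
  (hproper : forall k, proper_fun (f k))
  (hconv : forall k, convex_fun (f k))
  (hC : exists x, f 0%N x < +oo /\ forall k, (0 < k)%N -> f k x <= 0)
  (hvP : -oo < vP f) :
  (forall m : nat,
     cl_vfun f 0 <= vD f /\ vD f <= vDm f m /\ vDm f m <= vP f) /\
  (slater f ->
     (forall m : nat, vP f = vD f /\ vD f = vDm f m) /\
     (exists lam linf, solD f lam linf) /\
     (forall m : nat, exists lam, solDm f m lam) /\
     (forall lam linf, solD f lam linf ->
        forall m : nat, solDm f m (lam_hat lam linf m))).
Proof.
have hNy k x : f k x != -oo by have [h _] := hproper k; exact: h.
have [x0 [f0x0 fx0]] := hC.
have P1 m : cl_vfun f 0 <= vD f /\ vD f <= vDm f m /\ vDm f m <= vP f.
  split; first exact: (@cl_le_vD R X f hNy hconv x0 f0x0 fx0).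
  by split; [exact: (@vD_le_vDm R X f hNy) | exact: (@vDm_le_vP R X f hNy)].
split => // hs.
have [xs [f0xs sups]] := hs.
set s := ereal_sup [set f k xs | k in [set k | (0 < k)%N]] in sups.
have sNy : -oo < s.
  apply: lt_le_trans (_ : f 1%N xs <= s); first by rewrite ltNye.
  by apply: ereal_sup_ubound; exists 1%N.
have sfin : s \is a fin_num by rewrite fin_numE -ltNye sNy -ltey (lt_trans sups (ltry 0)).
set sig := fine s.
have sE : s = sig%:E by rewrite /sig fineK.
have sig0 : (sig < 0)%R by rewrite -lte_fin -sE.
have vPy : vP f < +oo.
  apply: le_lt_trans f0x0; apply: ereal_inf_lbound; exists x0 => //.
have slb k : (0 < k)%N -> f k xs <= (0 - - sig)%:E.
  by move=> k0; rewrite sub0r opprK -sE; apply: ereal_sup_ubound; exists k.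
have [lam [linf [hl [linf0 [hb l00]]]]] :=
  @dual_bound R X f hNy hconv 0 xs (- sig) hvP vPy (ltac:(rewrite oppr_gt0 //)) f0xs slb.
have vPfin : vP f \is a fin_num by rewrite fin_numE -ltNye hvP -ltey vPy.
have hb' : vP f <= dualD_obj f lam linf.
  by rewrite -(fineK vPfin); move: hb; rewrite mul0r addr0.
have dD : dualD_obj f lam linf <= vD f by apply: ereal_sup_ubound; exists (lam, linf).
have eqs m : vP f = vD f /\ vD f = vDm f m.
  have [_ [h1 h2]] := P1 m.
  split; apply/eqP; rewrite eq_le.
    by rewrite (le_trans hb' dD) (le_trans h1 h2).
  by rewrite h1 (le_trans h2 (le_trans hb' dD)).
have final : forall lam linf, solD f lam linf -> forall m : nat, solDm f m (lam_hat lam linf m).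
  move=> l li [hl' [li0 hd]] m; split; first exact: lamhat_inf.
  apply/eqP; rewrite eq_le; apply/andP; split.
    by apply: ereal_sup_ubound; exists (lam_hat l li m) => //; exact: lamhat_inf.
  have [e1 e2] := eqs m.
  rewrite -e2 -hd; exact: (@dualD_le_dualDm R X f hNy l li m hl' li0).
have sol : solD f lam linf.
  split => //; split => //; apply/eqP; rewrite eq_le dD /=.
  by have [e1 _] := eqs 0%N; rewrite -e1.
split => //; split; first by exists lam, linf.
split => // m; exists (lam_hat lam linf m); exact: final.
Qed.
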